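(* Let $R$ be a finite commutative ring, $K\le R^\times$, and $\mathcal A=\mathcal A(K,R)$ the multiplication S-ring of $\mathrm{Cyc}(K,R)$. Then $\mathcal S^*(\mathcal A)$ contains the sets $rK$ for all $r\in R^\times$ and the sets $(1+rK)\cap R^\times$ for all $r\in R$.
   Context: All rings have an identity. A scheme on a finite set $V$ is a pair $(V,\mathcal R)$, $\mathcal R$ a partition of $V\times V$ into nonempty basis relations, closed under transposition, with the diagonal a union of basis relations and with the intersection numbers $|\{y:(x,y)\in R_1,(y,z)\in R_2\}|$ depending only on the basis relation containing $(x,z)$; relations are unions of basis relations. For a set $\mathcal M$ of relations, $[\mathcal C,\mathcal M]$ is the smallest scheme on $V$ having all relations of $\mathcal C$ and of $\mathcal M$ as relations; $\mathcal C_w=[\mathcal C,\{(w,w)\}]$. If $\Delta(U)$ is a relation, the restriction $\mathcal C_U$ is the scheme on $U$ with basis relations the nonempty $S\cap U^2$. $\mathrm{Iso}(\mathcal C)$ is the group of permutations of $V$ permuting the basis relations; for $\Gamma\le\mathrm{Iso}(\mathcal C)$, $\mathcal C^\Gamma$ is the scheme whose relations are the $\Gamma$-invariant relations of $\mathcal C$. For $K\le R^\times$, $\mathcal C=\mathrm{Cyc}(K,R)$ is the scheme on $R$ with basis relations $\{(x,y): y-x\in rK\}$, $r\in R$. Put $u=0$; then $\mathcal C'=((\mathcal C_u)_{R^\times})^{R^\times_{right}}$, where $R^\times_{right}=\{x\mapsto xa: a\in R^\times\}$, is a scheme on $R^\times$ whose basis relations are invariant under $R^\times_{right}$, hence each is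 of the form $R(X)=\{(g,xg): g\in R^\times, x\in X\}$ for some $X\subseteq R^\times$. An S-ring over a finite group $G$ is a subring of $\mathbb Z[G]$ with $\mathbb Z$-basis $\{\sum_{x\in X}x: X\in\mathcal S\}$ for a partition $\mathcal S$ of $G$ with $\{1\}\in\mathcal S$ and $X\in\mathcal S\Rightarrow X^{-1}\in\mathcal S$; $\mathcal S^*$ denotes the set of unions of members of $\mathcal S$ (basic sets). The multiplication S-ring $\mathcal A(K,R)$ is the S-ring over $R^\times$ whose basic sets are the sets $X$ with $R(X)$ a basis relation of $\mathcal C'$. *)

(* Defs.v *)
From mathcomp Require Import all_boot all_fingroup all_algebra.
Set Implicit Arguments. Unset Strict Implicit. Unset Printing Implicit Defensive.
Import GRing.Theory.
Local Open Scope ring_scope.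

Section Schemes.
Variable V : finType.

Definition transp (S : {set V * V}) : {set V * V} := [set (xy.2, xy.1) | xy in S].
Definition diagR : {set V * V} := [set (x, x) | x : V].
Definition unions (B : {set {set V * V}}) : {set {set V * V}} :=
  [set \bigcup_(S in Q) S | Q : {set {set V * V}} in powerset B].
Definition inum (S1 S2 : {set V * V}) (x z : V) : nat :=
  #|[set y | ((x, y) \in S1) && ((y, z) \in S2)]|.
Definition is_scheme (P : {set {set V * V}}) : bool :=
  [&& partition P [set: V * V],
      [forall S in P, transp S \in P],
      diagR \in unions P &
      [forall S1 in P, forall S2 in P, forall T in P, forall xz in T, forall xz' in T,
         inum S1 S2 xz.1 xz.2 == inum S1 S2 xz'.1 xz'.2]].
(* the set of relations of the smallest scheme [.,M] having all relations in M
   as relations: intersection of the relation sets of all such schemes *)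
Definition closure_rels (M : {set {set V * V}}) : {set {set V * V}} :=
  \bigcap_(Q : {set {set V * V}} | is_scheme Q && (M \subset unions Q)) unions Q.
(* basis relations = minimal nonempty relations *)
Definition atoms (A : {set {set V * V}}) : {set {set V * V}} :=
  [set S in A | (S != set0) &&
     [forall T in A, (T \subset S) ==> ((T == set0) || (T == S))]].
Definition restr_basis (B : {set {set V * V}}) (U : {set V}) : {set {set V * V}} :=
  [set S :&: setX U U | S in B & S :&: setX U U != set0].
End Schemes.

Section Multiplication.
Variable R : finComUnitRingType.
Variable K : {group {unit R}}.

Definition Uset : {set R} := [set x : R | x \is a GRing.unit].
Definition rK (r : R) : {set R} := [set r * val k | k in K].
Definition cyc_basis : {set {set R * R}} :=
  [set [set xy : R * R | xy.2 - xy.1 \in rK r] | r : R].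
(* basis relations of C_u = [C, {(u,u)}], u = 0 *)
Definition C0_basis : {set {set R * R}} :=
  atoms (closure_rels (cyc_basis :|: [set [set ((0 : R), (0 : R))]])).
Definition CU_basis : {set {set R * R}} := restr_basis C0_basis Uset.
Definition right_inv (T : {set R * R}) : bool :=
  [forall a in Uset, forall xy in T, (xy.1 * a, xy.2 * a) \in T].
(* basis relations of C' = ((C_u)_{R^x})^{R^x_right} *)
Definition Cp_basis : {set {set R * R}} :=
  atoms [set T in unions CU_basis | right_inv T].
Definition Rrel (X : {set R}) : {set R * R} :=
  [set gy : R * R | (gy.1 \in Uset) && [exists x in X, gy.2 == x * gy.1]].
(* basic sets of the multiplication S-ring A(K,R) *)
Definition basic_sets : {set {set R}} :=
  [set X : {set R} | (X \subset Uset) && (Rrel X \in Cp_basis)].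
Definition in_Sstar (Y : {set R}) : bool :=
  Y == \bigcup_(X in basic_sets | X \subset Y) X.
End Multiplication.

(* Main.v *)
Require Import Defs.
From mathcomp Require Import all_boot all_fingroup all_algebra.
From mathcomp Require Import zify ring.
Import GRing.Theory.
Local Open Scope ring_scope.
Set Implicit Arguments. Unset Strict Implicit.
Section Gen.
Variable V : finType.
Implicit Types (P Q F : {set {set V * V}}) (A B S T X : {set V * V}).

Lemma unionsP P X : reflect (exists2 P' : {set {set V * V}}, P' \subset P & X = \bigcup_(S in P') S) (X \in unions P).
Proof.
apply: (iffP imsetP) => [[P' HP' ->]|[P' HP' ->]]; exists P' => //.
  by rewrite powersetE in HP'.
by rewrite powersetE.
Qed.

Lemma unions_cover P X : (forall p, p \in X -> exists2 S, S \in P & (p \in S) && (S \subset X)) -> X \in unions P.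
Proof.
move=> H; apply/unionsP; exists [set S in P | S \subset X].
  by apply/subsetP => S; rewrite inE => /andP[].
apply/setP => p; apply/idP/bigcupP.
- by move=> /H [S SP /andP[pS SX]]; exists S => //; rewrite inE SP SX.
- by move=> [S]; rewrite inE => /andP[_ /subsetP SX] /SX.
Qed.

Lemma unions_setD P A B : (forall S1 S2, S1 \in P -> S2 \in P -> S1 != S2 -> [disjoint S1 & S2]) ->
  A \in unions P -> B \in unions P -> A :\: B \in unions P.
Proof.
move=> Hd /unionsP[P1 s1 ->] /unionsP[P2 s2 ->].
apply/unionsP; exists (P1 :\: P2); first by apply: subset_trans s1; exact: subsetDl.
apply/setP => p; rewrite inE; apply/andP/bigcupP.
- move=> [Hn /bigcupP[S SP1 pS]]; exists S => //; rewrite inE SP1 andbT.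
  by apply: contra Hn => SP2; apply/bigcupP; exists S.
- case=> S; rewrite inE => /andP[SP2n SP1] pS; split; last by apply/bigcupP; exists S.
  apply/bigcupP => -[S' SP2 pS'].
  have nS: S != S' by apply: contraNneq SP2n => ->.
  have := Hd S S' (subsetP s1 _ SP1) (subsetP s2 _ SP2) nS.
  by move/disjointFr => /(_ p pS); rewrite pS'.
Qed.

Lemma atom_exists F A p : (forall A B, A \in F -> B \in F -> A :\: B \in F) -> A \in F -> p \in A ->
  exists2 T, T \in atoms F & (p \in T) && (T \subset A).
Proof.
move=> FD AF pA.
have P0 : (A \in F) && (p \in A) && (A \subset A) by rewrite AF pA subxx.
case: (@arg_minnP _ A (fun T => (T \in F) && (p \in T) && (T \subset A)) (fun T => #|T|) P0) => T /andP[/andP[TF pT] TA] Hmin.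
exists T; last by rewrite pT TA.
rewrite inE TF /=; apply/andP; split; first by apply/set0Pn; exists p.
apply/forallP => T'; apply/implyP => T'F; apply/implyP => T'T.
case pT': (p \in T').
  apply/orP; right; rewrite eqEcard T'T /=.
  apply: Hmin; rewrite T'F pT' /=; exact: subset_trans T'T TA.
apply/orP; left; apply/eqP/cards0_eq.
have H1 : (T :\: T' \in F) && (p \in T :\: T') && (T :\: T' \subset A).
  rewrite FD // inE pT' pT /=; apply: subset_trans TA; exact: subsetDl.
have := Hmin _ H1; rewrite cardsD (setIidPr T'T).
have := subset_leq_card T'T.
have : (0 < #|T|)%N by rewrite card_gt0; apply/set0Pn; exists p.
lia.
Qed.

Lemma atoms_disj F A B : (forall A B, A \in F -> B \in F -> A :\: B \in F) ->
  A \in atoms F -> B \in atoms F -> A != B -> [disjoint A & B].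
Proof.
move=> FD; rewrite !inE => /andP[AF /andP[An0 /forallP HA]] /andP[BF /andP[Bn0 /forallP HB]] nAB.
have IF : A :&: B \in F by rewrite -[A :&: B]set0U -(setDv A) -setDDr !FD.
have := HA (A :&: B); rewrite IF subsetIl /= => /orP[]; first by rewrite setI_eq0.
move/eqP/setIidPl => AB.
have := HB A; rewrite AF AB /= => /orP[]; first by rewrite (negbTE An0).
by rewrite (negbTE nAB).
Qed.

Lemma closure_setD M A B : A \in closure_rels M -> B \in closure_rels M -> A :\: B \in closure_rels M.
Proof.
move=> /bigcapP HA /bigcapP HB; apply/bigcapP => Q HQ.
apply: unions_setD (HA Q HQ) (HB Q HQ).
by move: HQ => /andP[/and4P[/and3P[_ /trivIsetP tI _] _ _ _] _].
Qed.

Lemma block_ex Q p : is_scheme Q -> exists2 S, S \in Q & p \in S.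
Proof.
move=> /and4P[/and3P[/eqP cov _ _] _ _ _].
have : p \in cover Q by rewrite cov inE.
by move/bigcupP => [S SQ pS]; exists S.
Qed.

Lemma block_sub Q S A p : is_scheme Q -> S \in Q -> p \in S -> A \in unions Q -> p \in A -> S \subset A.
Proof.
move=> /and4P[/and3P[_ /trivIsetP tI _] _ _ _] SQ pS /unionsP[P' sP' ->] /bigcupP[S' S'P pS'].
case: (eqVneq S S') => [->|nS]; first exact: bigcup_sup.
have := tI S S' SQ (subsetP sP' _ S'P) nS.
by move/disjointFr => /(_ p pS); rewrite pS'.
Qed.

Lemma inum_ex Q S1 S2 T x z x' z' : is_scheme Q -> S1 \in Q -> S2 \in Q -> T \in Q ->
  (x, z) \in T -> (x', z') \in T -> (exists y, ((x, y) \in S1) && ((y, z) \in S2)) ->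
  exists y, ((x', y) \in S1) && ((y, z') \in S2).
Proof.
move=> /and4P[_ _ _ /forallP H] S1Q S2Q TQ xzT xzT' [y Hy].
have := H S1; rewrite S1Q /= => /forallP /(_ S2); rewrite S2Q /= => /forallP/(_ T).
rewrite TQ /= => /forallP/(_ (x,z)); rewrite xzT /= => /forallP/(_ (x',z')).
rewrite xzT' /= => /eqP E.
have : (0 < inum S1 S2 x' z')%N.
  by rewrite -E /inum card_gt0; apply/set0Pn; exists y; rewrite inE.
by rewrite /inum card_gt0 => /set0Pn [y']; rewrite inE; exists y'.
Qed.
End Gen.
Section Mult.
Variable R : finComUnitRingType.
Variable K : {group {unit R}}.
Local Notation U := (Uset R).
Definition Ec c := [set xy : R * R | xy.2 - xy.1 \in rK K c].
Definition Mb := cyc_basis K :|: [set [set ((0 : R), (0 : R))]].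

Lemma rKP c x : reflect (exists2 k, k \in K & x = c * val k) (x \in rK K c).
Proof. by apply: (iffP imsetP) => [[k kK ->]|[k kK ->]]; exists k. Qed.

Lemma rK_self c : c \in rK K c.
Proof. by apply/rKP; exists 1%g; rewrite ?group1 // FinRing.val_unit1 mulr1. Qed.

Lemma keyA Q g h x y S x' y' : is_scheme Q -> Mb \subset unions Q ->
  x \in rK K g -> y \in rK K h -> S \in Q -> (x,y) \in S -> (x',y') \in S ->
  (x' \in rK K g) && (y' \in rK K h).
Proof.
move=> HQ HM xg yh SQ xyS xyS'.
have D0Q : [set ((0:R),(0:R))] \in unions Q by apply: (subsetP HM); rewrite !inE eqxx orbT.
have Eq c : Ec c \in unions Q.
  by apply: (subsetP HM); rewrite inE; apply/orP; left; apply/imsetP; exists c.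
case: (@block_ex _ Q (x,0) HQ) => S1 S1Q xS1.
case: (@block_ex _ Q (0,y) HQ) => S2 S2Q yS2.
case: (@block_ex _ Q (0,0) HQ) => D DQ zD.
have S1E : S1 \subset Ec (-g).
  apply: (block_sub HQ S1Q xS1 (Eq _)).
  by rewrite inE /= sub0r; case/rKP: xg => k kK ->; apply/rKP; exists k; rewrite ?mulNr.
have S2E : S2 \subset Ec h.
  by apply: (block_sub HQ S2Q yS2 (Eq _)); rewrite inE /= subr0.
have DD : D \subset [set (0,0)] by apply: (block_sub HQ DQ zD D0Q); rewrite inE.
have S2z : forall z w, (z,w) \in S2 -> z = 0.
  move=> z w zw.
  have [|u /andP[zu _]] := inum_ex HQ DQ S2Q S2Q yS2 zw; first by exists 0; rewrite zD yS2.
  by move/(subsetP DD): zu; rewrite inE => /eqP [->].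
have [|z /andP[xz zy]] := inum_ex HQ S1Q S2Q SQ xyS xyS'; first by exists 0; rewrite xS1 yS2.
have z0 := S2z _ _ zy; subst z.
move/(subsetP S2E): zy; rewrite inE /= subr0 => ->; rewrite andbT.
move/(subsetP S1E): xz; rewrite inE /= sub0r => /rKP[k kK Hk].
by apply/rKP; exists k => //; apply: oppr_inj; rewrite Hk mulNr.
Qed.

Definition W1 r := [set xy : R * R | [exists g, (xy.1 \in rK K g) && (xy.2 \in rK K (r * g))]].
Definition W2 r := [set xy : R * R | [exists g, (xy.1 \in rK K g) && (xy.2 - xy.1 \in rK K (r * g))]].

Lemma W1_cl r : W1 r \in closure_rels Mb.
Proof.
apply/bigcapP => Q /andP[HQ HM]; apply: unions_cover => -[x y].
rewrite inE => /existsP[g /andP[xg yh]].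
case: (@block_ex _ Q (x,y) HQ) => S SQ pS; exists S => //; rewrite pS /=.
apply/subsetP => -[x' y'] q; rewrite inE; apply/existsP; exists g.
exact: keyA HQ HM xg yh SQ pS q.
Qed.

Lemma W2_cl r : W2 r \in closure_rels Mb.
Proof.
apply/bigcapP => Q /andP[HQ HM]; apply: unions_cover => -[x y].
rewrite inE => /existsP[g /andP[xg yh]].
case: (@block_ex _ Q (x,y) HQ) => S SQ pS; exists S => //; rewrite pS /=.
have SE : S \subset Ec (r * g).
  apply: (block_sub HQ SQ pS); last by rewrite inE.
  by apply: (subsetP HM); rewrite inE; apply/orP; left; apply/imsetP; exists (r * g).
apply/subsetP => -[x' y'] q; rewrite inE; apply/existsP; exists g.
have /andP[-> _] := keyA HQ HM xg (rK_self y) SQ pS q.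
by move/(subsetP SE): q; rewrite inE.
Qed.

Lemma CU_disj S1 S2 : S1 \in CU_basis K -> S2 \in CU_basis K -> S1 != S2 -> [disjoint S1 & S2].
Proof.
move=> /imsetP[A1 HA1 ->] /imsetP[A2 HA2 ->] n.
rewrite inE in HA1; rewrite inE in HA2; case/andP: HA1 => HA1 _; case/andP: HA2 => HA2 _.
have nA : A1 != A2 by apply: contraNneq n => ->.
have := atoms_disj (@closure_setD _ _) HA1 HA2 nA.
move/(disjointWl (subsetIl A1 (setX U U))).
by move/(disjointWr (subsetIl A2 (setX U U))).
Qed.

Lemma CU_sub T : T \in unions (CU_basis K) -> T \subset setX U U.
Proof.
move=> /unionsP[P' sP' ->]; apply/bigcupsP => S /(subsetP sP') /imsetP[A _ ->].
exact: subsetIr.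
Qed.

Lemma to_CU W Y : W \in closure_rels Mb -> W :&: setX U U = Rrel Y -> Rrel Y \in unions (CU_basis K).
Proof.
move=> WC WY; apply: unions_cover => p pY.
have : p \in W :&: setX U U by rewrite WY.
rewrite inE => /andP[pW pU].
case: (atom_exists (@closure_setD _ Mb) WC pW) => S0 S0at /andP[pS0 S0W].
exists (S0 :&: setX U U).
  apply/imsetP; exists S0 => //; rewrite inE S0at /=.
  by apply/set0Pn; exists p; rewrite inE pS0 pU.
by rewrite inE pS0 pU /= -WY; exact: setSI.
Qed.

Lemma Sstar_of Y : Rrel Y \in unions (CU_basis K) -> in_Sstar K Y.
Proof.
move=> HY; rewrite /in_Sstar; apply/eqP/setP => y; apply/idP/bigcupP; last first.
  by move=> [X /andP[_ /subsetP]]; apply.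
move=> yY.
pose F := [set T in unions (CU_basis K) | right_inv T].
have FD : forall A B, A \in F -> B \in F -> A :\: B \in F.
  move=> A B; rewrite !inE => /andP[AU /forallP Ai] /andP[BU /forallP Bi].
  rewrite unions_setD //=; last exact: CU_disj.
  apply/forallP => a; apply/implyP => aU; apply/forallP => -[g h]; apply/implyP.
  rewrite inE /= => /andP[nB hA]; rewrite inE.
  move: (Ai a); rewrite aU /= => /forallP /(_ (g, h)); rewrite hA /= => ->.
  rewrite andbT; apply: contra nB => HB.
  have aU' : a^-1 \in U by move: aU; rewrite !inE unitrV.
  rewrite inE in aU.
  move: (Bi a^-1); rewrite aU' /= => /forallP /(_ (g*a, h*a)); rewrite HB /=.
  by rewrite !mulrK.
have RF : Rrel Y \in F.
  rewrite inE HY /=; apply/forallP => a; apply/implyP => aU; rewrite inE in aU.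
  apply/forallP => -[g h]; apply/implyP; rewrite !inE /=.
  move=> /andP[gU /existsP[x /andP[xY /eqP ->]]]; apply/andP; split.
    by rewrite unitrM gU aU.
  by apply/existsP; exists x; rewrite xY mulrA eqxx.
have p1 : (1, y) \in Rrel Y.
  by rewrite inE /= inE unitr1; apply/existsP; exists y; rewrite yY mulr1 eqxx.
case: (atom_exists FD RF p1) => T Tat /andP[pT TY].
have TF : T \in F by move: Tat; rewrite inE => /andP[].
move: TF; rewrite inE => /andP[TU /forallP Ti].
have TUU := CU_sub TU.
pose X := [set z | (1, z) \in T].
have RX : Rrel X = T.
  apply/setP => -[g h]; rewrite !inE /=; apply/idP/idP.
  - move=> /andP[gU /existsP[x /andP[]]]; rewrite inE => xT /eqP ->.
    have gU' : g \in U by rewrite inE.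
    by move: (Ti g); rewrite gU' /= => /forallP /(_ (1,x)); rewrite xT /= mul1r.
  - move=> ghT.
    have := subsetP TUU _ ghT; rewrite inE /= => /andP[gU hU].
    have gU' := gU; rewrite inE in gU'.
    rewrite gU' /=; apply/existsP; exists (h * g^-1); rewrite inE mulrVK // eqxx andbT.
    have gV : g^-1 \in U by rewrite inE unitrV.
    by move: (Ti g^-1); rewrite gV /= => /forallP /(_ (g,h)); rewrite ghT /= divrr.
exists X; last by rewrite inE.
apply/andP; split; last first.
  apply/subsetP => z; rewrite inE => /(subsetP TY); rewrite inE /=.
  by move=> /andP[_ /existsP[x /andP[xY /eqP ->]]]; rewrite mulr1.
rewrite inE; apply/andP; split; last by rewrite RX.
apply/subsetP => z; rewrite inE => zT; have := subsetP TUU _ zT.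
by rewrite inE => /andP[_].
Qed.

Lemma auxA (T : comUnitRingType) (r g a b : T) : a \is a GRing.unit -> r * (b / a) * (g * a) = r * g * b.
Proof.
move=> au; have -> : r * (b / a) * (g * a) = r * g * b * (a^-1 * a) by ring.
by rewrite mulVr // mulr1.
Qed.
Lemma auxD (T : comUnitRingType) (r g a b y : T) : a \is a GRing.unit -> y - g * a = r * g * b ->
  (1 + r * (b / a)) * (g * a) = y.
Proof.
move=> au H.
have -> : (1 + r * (b / a)) * (g * a) = g * a + r * g * b * (a^-1 * a) by ring.
by rewrite mulVr // mulr1 -H; ring.
Qed.
Lemma auxC (T : comUnitRingType) (r k x : T) : (1 + r * k) * x - x = r * x * k.
Proof. ring. Qed.

Lemma W1_eq r : r \is a GRing.unit -> W1 r :&: setX U U = Rrel (rK K r).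
Proof.
move=> rU; apply/setP => -[x y]; rewrite !inE /=; apply/idP/idP.
- move=> /andP[/existsP[g /andP[/rKP[k1 k1K ->] /rKP[k2 k2K ->]]] /andP[xU yU]].
  rewrite xU /=; apply/existsP; exists (r * val (k2 * k1^-1)%g).
  apply/andP; split; first by apply/rKP; exists (k2 * k1^-1)%g; rewrite ?groupM ?groupV.
  have k1u : val k1 \is a GRing.unit := valP k1.
  rewrite FinRing.val_unitM FinRing.val_unitV; apply/eqP.
  by rewrite auxA.
- move=> /andP[xU /existsP[z /andP[/rKP[k kK ->] /eqP ->]]].
  have ku : val k \is a GRing.unit := valP k.
  apply/andP; split.
    by apply/existsP; exists x; rewrite rK_self /=; apply/rKP; exists k => //; rewrite mulrAC.
  by rewrite xU !unitrM rU ku xU.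
Qed.

Lemma W2_eq r : W2 r :&: setX U U = Rrel ([set 1 + y | y in rK K r] :&: U).
Proof.
apply/setP => -[x y]; rewrite !inE /=; apply/idP/idP.
- move=> /andP[/existsP[g /andP[/rKP[k1 k1K Hx] /rKP[k2 k2K Hy]]] /andP[xU yU]].
  rewrite xU /=; apply/existsP.
  have k1u : val k1 \is a GRing.unit := valP k1.
  pose z := 1 + r * val (k2 * k1^-1)%g.
  have zx : z * x = y.
    rewrite /z FinRing.val_unitM FinRing.val_unitV Hx; apply: auxD k1u _.
    by rewrite -Hx.
  have zU : z \is a GRing.unit.
    have -> : z = y * x^-1 by rewrite -zx mulrK.
    by rewrite unitrM unitrV xU yU.
  exists z; rewrite zx eqxx andbT inE [z \in U]inE zU andbT.
  by apply/imsetP; exists (r * val (k2 * k1^-1)%g) => //; apply/rKP; exists (k2 * k1^-1)%g; rewrite ?groupM ?groupV.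
- move=> /andP[xU /existsP[z /andP[]]]; rewrite inE => /andP[/imsetP[w /rKP[k kK ->] ->] zU] /eqP ->.
  apply/andP; split.
    by apply/existsP; exists x; rewrite rK_self /=; apply/rKP; exists k => //; rewrite auxC.
  rewrite inE in zU; by rewrite xU unitrM zU xU.
Qed.

End Mult.

Unset Implicit Arguments.
Theorem theorem4p2 (R : finComUnitRingType) (K : {group {unit R}}) :
  (forall r : R, r \in Uset R -> in_Sstar K (rK K r)) /\
  (forall r : R, in_Sstar K ([set 1 + y | y in rK K r] :&: Uset R)).
Proof.
split => [r rU | r]; apply: Sstar_of.
  rewrite inE in rU; exact: (to_CU (W1_cl K r) (W1_eq K rU)).
exact: (to_CU (W2_cl K r) (W2_eq K r)).
Qed.
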